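(* Let $q$ be even and let $H$ be a $BH(n,q)$ matrix, $H_{i,j}=e^{2\pi i L_{i,j}/q}$ with $L$ an integer matrix, whose $\mathbb{Z}_q$-rank is $r$. Suppose there exist integer matrices $Q$ of size $n\times r$ and $S$ of size $r\times n$ with $QS\equiv L\pmod q$ such that every entry of the first row of $S$ is even. Then there exists a $BH(2n,q)$ matrix whose $\mathbb{Z}_q$-rank is $r$.
   Context: A $BH(n,q)$ matrix is an $n\times n$ complex matrix whose entries are $q$-th roots of unity and which satisfies $HH^\ast=nI_n$. The $\mathbb{Z}_q$-rank of an $n\times n$ integer matrix $L$ is the smallest positive integer $r$ such that there exist integer matrices $S$ ($n\times r$) and $T$ ($r\times n$) with $ST\equiv L\pmod q$ entrywise; the $\mathbb{Z}_q$-rank of a $BH(n,q)$ matrix $H$ is that of the integer matrix $L$ with entries in $\{0,\dots,q-1\}$ and $H_{i,j}=e^{2\pi i L_{i,j}/q}$. *)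

(* Defs.v *)
(* complex numbers are algC (algebraic complex numbers),
   which contain all roots of unity. *)
From HB Require Import structures.
From mathcomp Require Import all_boot all_order all_algebra all_field.
Set Implicit Arguments. Unset Strict Implicit. Unset Printing Implicit Defensive.
Import Order.TTheory GRing.Theory Num.Theory.
Local Open Scope ring_scope.

(* e^{2 pi i / q}: q.-root (-1) is e^{i pi / q} (minimal argument root). *)
Definition zeta (q : nat) : algC := (q.-root (-1)) ^+ 2.

Definition BH (n q : nat) (H : 'M[algC]_n) : Prop :=
  (forall i j, H i j ^+ q = 1) /\
  H *m (map_mx (@Num.conj algC) H)^T = (n%:R)%:M.

Definition Zq_factors (n q r : nat) (L : 'M[int]_n) : Prop :=
  exists (S : 'M[int]_(n, r)) (T : 'M[int]_(r, n)),
    forall i j, ((S *m T) i j = L i j %[mod q%:Z])%Z.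

Definition Zq_rank_is (n q r : nat) (L : 'M[int]_n) : Prop :=
  (0 < r)%N /\ Zq_factors q r L /\
  (forall r' : nat, (0 < r')%N -> Zq_factors q r' L -> (r <= r')%N).

Definition BH_Zq_rank_is (n q r : nat) (H : 'M[algC]_n) : Prop :=
  exists L : 'M[int]_n,
    (forall i j, (0 <= L i j) /\ (L i j < q%:Z)) /\
    (forall i j, H i j = zeta q ^ (L i j)) /\
    Zq_rank_is q r L.

(* Main.v *)
Require Import Defs.
From HB Require Import structures.
From mathcomp Require Import all_boot all_order all_algebra all_field.
From mathcomp Require Import zify ring.
Import Order.TTheory GRing.Theory Num.Theory.
Local Open Scope ring_scope.

Lemma BH_cast m1 m2 (e : m1 = m2) q (A : 'M[algC]_m1) :
  BH q A -> BH q (castmx (e, e) A).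
Proof. by case: m2 / e; rewrite castmx_id. Qed.

Lemma rank_cast m1 m2 (e : m1 = m2) q r (A : 'M[algC]_m1) :
  BH_Zq_rank_is q r A -> BH_Zq_rank_is q r (castmx (e, e) A).
Proof. by case: m2 / e; rewrite castmx_id. Qed.

Lemma unit_conj (q : nat) (x : algC) : (0 < q)%N -> x ^+ q = 1 -> x * x^* = 1.
Proof.
move=> q0 hx; rewrite -normCK.
have : `|x| ^+ q == 1 by rewrite -normrX hx normr1.
by rewrite pexpr_eq1 // => /eqP ->; rewrite expr1n.
Qed.

Lemma zetaq q : (0 < q)%N -> zeta q ^+ q = 1.
Proof. by move=> q0; rewrite /zeta -exprM mulnC exprM rootCK // sqrrN expr1n. Qed.

Lemma zetah q h : (0 < q)%N -> q = (h + h)%N -> zeta q ^+ h = -1.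
Proof. by move=> q0 qh; rewrite /zeta -exprM mul2n -addnn -qh rootCK. Qed.

Lemma zeta_neq0 q : (0 < q)%N -> zeta q != 0.
Proof.
move=> q0; apply/eqP => z0; have := zetaq q q0; rewrite z0 expr0n gtn_eqF //=.
by move/eqP; rewrite eq_sym oner_eq0.
Qed.

Lemma zetaz q (k : int) : (0 < q)%N -> (zeta q ^ k) ^+ q = 1.
Proof.
move=> q0; rewrite exprnP exprz_exp mulrC -exprz_exp -exprnP zetaq //.
by rewrite exp1rz.
Qed.

Lemma zeta_mod q (k : int) : (0 < q)%N -> zeta q ^ (k %% q)%Z = zeta q ^ k.
Proof.
move=> q0; rewrite [in RHS](divz_eq k q) [in RHS]exprzDr ?unitfE ?zeta_neq0 //.
have Lz (m : int) : zeta q ^ (m * q%:Z) = 1.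
  by rewrite -exprz_exp -exprnP zetaz.
by rewrite Lz mul1r.
Qed.

Lemma addE (m p : nat) (A B : 'M[int]_(m, p)) i j : (A + B) i j = A i j + B i j.
Proof. by rewrite mxE. Qed.

Theorem corollary1 (n q r : nat) (H : 'M[algC]_n) (L : 'M[int]_n) :
  (0 < q)%N -> ~~ odd q ->
  BH q H ->
  (forall i j, H i j = zeta q ^ (L i j)) ->
  Zq_rank_is q r L ->
  (exists (Q : 'M[int]_(n, r)) (S : 'M[int]_(r, n)),
      (forall i j, ((Q *m S) i j = L i j %[mod q%:Z])%Z) /\
      (forall (i : 'I_r) (j : 'I_n), val i = 0%N -> (2 %| S i j)%Z)) ->
  exists H' : 'M[algC]_(2 * n), BH q H' /\ BH_Zq_rank_is q r H'.
Proof.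
move=> q0 qe [Hq HH] HL [r0 [_ rmin]] [Q [S [QS Sev]]].
pose i0 : 'I_r := Ordinal r0.
pose h := q./2.
have qh : q = (h + h)%N by rewrite addnn -[LHS]odd_double_half (negbTE qe).
pose d := \row_i zeta q ^ (Q i i0).
pose K := diag_mx d *m H.
pose Hp := block_mx H K H (-K).
pose Lr : 'M[int]_(n + n) := block_mx L (L + \matrix_(i, j) Q i i0)
    L (L + \matrix_(i, j) (Q i i0 + h%:Z)).
pose Lp := map_mx (fun x => (x %% q)%Z) Lr.
have e : (n + n = 2 * n)%N by rewrite mul2n addnn.
have Kij i j : K i j = zeta q ^ (Q i i0) * H i j by rewrite /K mul_diag_mx !mxE.
have KK : K *m (map_mx (@Num.conj algC) K)^T = (n%:R)%:M.
  rewrite /K map_mxM trmx_mul mulmxA -(mulmxA _ H) HH mul_mx_scalar -scalemxAl.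
  rewrite map_diag_mx tr_diag_mx mulmx_diag.
  rewrite -scalemx1; congr (_ *: _); apply/matrixP => i j; rewrite !mxE.
  case: eqP => // _; rewrite mulr1n; apply: (@unit_conj q _ q0); exact: zetaz.
exists (castmx (e, e) Hp); split.
  apply: BH_cast; split.
    move=> i j; rewrite /Hp -(splitK i) -(splitK j).
    case: (split i) => a; case: (split j) => b.
    - by rewrite block_mxEul.
    - by rewrite block_mxEur Kij exprMn Hq zetaz // mulr1.
    - by rewrite block_mxEdl.
    - rewrite block_mxEdr mxE Kij qh exprD -exprMn mulrNN exprMn -exprD -qh.
      by rewrite exprMn Hq zetaz // mulr1.
  rewrite /Hp map_block_mx tr_block_mx mulmx_block map_mxN.
  rewrite linearN /= !mulmxN !mulNmx opprK HH KK subrr.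
  rewrite (scalar_mx_block n n) natrD raddfD /=.
  by [].
apply: rank_cast; exists Lp; split.
  move=> i j; rewrite mxE; split; first by rewrite modz_ge0 // lt0n_neq0.
  by rewrite ltz_pmod // ltz_nat.
split.
  move=> i j; rewrite [Lp _ _]mxE zeta_mod // /Hp /Lr -(splitK i) -(splitK j).
  case: (split i) => a; case: (split j) => b.
  - by rewrite !block_mxEul.
  - rewrite !block_mxEur Kij !mxE exprzDr ?unitfE ?zeta_neq0 // HL mulrC //.
  - by rewrite !block_mxEdl.
  - rewrite !block_mxEdr mxE Kij !mxE !exprzDr ?unitfE ?zeta_neq0 // HL.
    by rewrite -exprnP zetah // mulrN1 mulrN mulrC.
split=> //; split.
  pose E : 'M[int]_(r, n) := \matrix_(k, j) (k == i0)%:R.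
  pose C : 'M[int]_(n, r) := \matrix_(i, k) ((k == i0)%:R * h%:Z).
  have QE i j : (Q *m E) i j = Q i i0.
    rewrite !mxE (bigD1 i0) //= big1 ?addr0; first by rewrite mxE eqxx mulr1.
    by move=> k /negbTE nk; rewrite mxE nk mulr0.
  have CS i j : (C *m S) i j = h%:Z * S i0 j.
    rewrite !mxE (bigD1 i0) //= big1 ?addr0; first by rewrite mxE eqxx mul1r mulrC.
    by move=> k /negbTE nk; rewrite mxE nk /= !mul0r.
  have CE i j : (C *m E) i j = h%:Z.
    rewrite !mxE (bigD1 i0) //= big1 ?addr0; first by rewrite !mxE eqxx mul1r mulr1.
    by move=> k /negbTE nk; rewrite mxE nk /= !mul0r.
  exists (col_mx Q (Q + C)), (row_mx S (S + E)) => i j.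
  rewrite [Lp _ _]mxE modz_mod mul_col_row /Lr -(splitK i) -(splitK j).
  case: (split i) => a; case: (split j) => b.
  - by rewrite !block_mxEul.
  - rewrite !block_mxEur mulmxDr !addE QE [X in L a b + X]mxE.
    apply/eqP; rewrite eqz_mod_dvd; move: (QS a b) => /eqP; rewrite eqz_mod_dvd.
    by rewrite opprD addrACA subrr addr0.
  - rewrite !block_mxEdl mulmxDl !addE CS.
    apply/eqP; rewrite eqz_mod_dvd; move: (QS a b) => /eqP; rewrite eqz_mod_dvd.
    move=> /dvdzP [k hk]; have /dvdzP [t ht] := Sev i0 b erefl.
    apply/dvdzP; exists (k + t); rewrite ht qh.
    move: hk; rewrite qh => hk.
    have -> : (Q *m S) a b = k * (h + h)%N + L a b by rewrite -hk subrK.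
    rewrite PoszD; ring.
  - rewrite !block_mxEdr mulmxDl !mulmxDr !addE QE CS CE [X in L a b + X]mxE.
    apply/eqP; rewrite eqz_mod_dvd; move: (QS a b) => /eqP; rewrite eqz_mod_dvd.
    move=> /dvdzP [k hk]; have /dvdzP [t ht] := Sev i0 b erefl.
    apply/dvdzP; exists (k + t); rewrite ht qh.
    move: hk; rewrite qh => hk.
    have -> : (Q *m S) a b = k * (h + h)%N + L a b by rewrite -hk subrK.
    rewrite PoszD; ring.
move=> r' r'0 [S' [T' hST]]; apply: rmin => //.
exists (usubmx S'), (lsubmx T') => i j.
rewrite mul_usub_mx mulmx_lsub.
move: (hST (lshift n i) (lshift n j)); set M := S' *m T'.
rewrite [Lp _ _]mxE /Lr block_mxEul modz_mod => <-.
by rewrite !mxE.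
Qed.
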